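(* The following set $\mathcal B_1$ of elements of $\hat{G}_{\Lambda,\Lambda_F}$ is linearly independent: (1) all $\bar\Xi^{\lambda_1}_{\lambda_2}\otimes f^{\dot I}_{\dot J}\otimes\Xi^{\lambda_3}_{\lambda_4}$ with $\lambda_1+\lambda_2>2$ and $\lambda_3+\lambda_4>2$; (2) all $\bar\Xi^{\lambda_1}_{\lambda_2}\otimes l^{\dot I}_{\dot J}$; (3) all $r^{\dot I}_{\dot J}\otimes\Xi^{\lambda_1}_{\lambda_2}$ with $\lambda_1\ne1$ or $\lambda_2\ne1$; (4) $\sigma^{\emptyset}_{\emptyset}$, all $\sigma^{I}_{\emptyset}$ and all $\sigma^{\emptyset}_{J}$; (5) all $\sigma^{I}_{J}$ such that the first integers of $I$ and $J$ are not simultaneously $1$. Here $\dot I,\dot J$ range over all sequences, $I,J$ over non-empty sequences, and the $\lambda_i$ over $\{1,\dots,\Lambda_F\}$.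
   Context: Fix positive integers $\Lambda,\Lambda_F$. A sequence $\dot I=i_1\cdots i_a$ is a finite, possibly empty, sequence of integers in $\{1,\dots,\Lambda\}$; $\emptyset$ is the empty sequence, undotted letters $I,J$ denote non-empty sequences, juxtaposition denotes concatenation, and $\delta^{\dot I}_{\dot J}$ is $1$ if $\dot I=\dot J$ and $0$ otherwise (similarly for integers). Let $\mathcal{T}_o$ be the complex vector space with basis the symbols $\bar\phi^{\lambda_1}\otimes s^{\dot K}\otimes\phi^{\lambda_2}$, $1\le\lambda_1,\lambda_2\le\Lambda_F$, $\dot K$ any sequence. For all sequences $\dot I,\dot J$ and all $\lambda_i\in\{1,\dots,\Lambda_F\}$ define linear operators on $\mathcal{T}_o$ (each written as a single symbol): first kind: $\bar\Xi^{\lambda_1}_{\lambda_2}\otimes f^{\dot I}_{\dot J}\otimes\Xi^{\lambda_3}_{\lambda_4}(\bar\phi^{\lambda_5}\otimes s^{\dot K}\otimes\phi^{\lambda_6})=\delta^{\lambda_5}_{\lambda_2}\delta^{\dot K}_{\dot J}\delta^{\lambda_6}_{\lambda_4}\,\bar\phi^{\lambda_1}\otimes s^{\dot I}\otimes\phi^{\lambda_3}$; second kind: $\bar\Xi^{\lambda_1}_{\lambda_2}\otimes l^{\dot I}_{\dot J}(\bar\phi^{\lambda_3}\otimes s^{\dot K}\otimes\phi^{\lambda_4})=\delta^{\lambda_3}_{\lambda_2}\sum_{\dot K_1\dot K_2=\dot K}\delta^{\dot K_1}_{\dot J}\,\bar\phi^{\lambda_1}\otimes s^{\dot I\dot K_2}\otimes\phi^{\lambda_4}$;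 third kind: $r^{\dot I}_{\dot J}\otimes\Xi^{\lambda_1}_{\lambda_2}(\bar\phi^{\lambda_3}\otimes s^{\dot K}\otimes\phi^{\lambda_4})=\delta^{\lambda_4}_{\lambda_2}\sum_{\dot K_1\dot K_2=\dot K}\delta^{\dot K_2}_{\dot J}\,\bar\phi^{\lambda_3}\otimes s^{\dot K_1\dot I}\otimes\phi^{\lambda_1}$; fourth kind: $\sigma^{\dot I}_{\dot J}(\bar\phi^{\lambda_1}\otimes s^{\dot K}\otimes\phi^{\lambda_2})=\sum_{\dot K_1\dot K_2\dot K_3=\dot K}\delta^{\dot K_2}_{\dot J}\,\bar\phi^{\lambda_1}\otimes s^{\dot K_1\dot I\dot K_3}\otimes\phi^{\lambda_2}$; sums run over all ways to write $\dot K$ as a concatenation of possibly empty sequences. The open string algebra $\hat{G}_{\Lambda,\Lambda_F}$ is the complex Lie algebra (commutator bracket) of operators on $\mathcal{T}_o$ spanned by all operators of these four kinds. *)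

(* Defs.v *)
From mathcomp Require Import all_boot all_algebra.
From mathcomp Require Import complex Rstruct.
From Stdlib Require Rdefinitions.
From Stdlib Require List.
Set Implicit Arguments. Unset Strict Implicit. Unset Printing Implicit Defensive.
Import GRing.Theory.

Definition CC : numClosedFieldType := complex Rdefinitions.R.

(* Basis symbol  phibar^{l1} (x) s^{K} (x) phi^{l2}  encoded as (l1, K, l2). *)
Definition basis : Type := prod (prod nat (seq nat)) nat.

Definition valid_lam (LF l : nat) : bool := (0 < l <= LF)%N.
Definition valid_seq (L : nat) (K : seq nat) : bool := all (fun k => 0 < k <= L)%N K.
Definition valid_basis (L LF : nat) (b : basis) : bool :=
  [&& valid_lam LF b.1.1, valid_seq L b.1.2 & valid_lam LF b.2].

Inductive gen : Type :=
| GenF of nat & nat & seq nat & seq nat & nat & nat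
    (* GenF l1 l2 I J l3 l4 = Xibar^{l1}_{l2} (x) f^I_J (x) Xi^{l3}_{l4} *)
| GenL of nat & nat & seq nat & seq nat
    (* GenL l1 l2 I J = Xibar^{l1}_{l2} (x) l^I_J *)
| GenR of seq nat & seq nat & nat & nat
    (* GenR I J l1 l2 = r^I_J (x) Xi^{l1}_{l2} *)
| GenS of seq nat & seq nat.
    (* GenS I J = sigma^I_J *)

(* Action of a generator on a basis vector: the image is the sum (with
   multiplicity) of the basis vectors in the returned list; sums over
   decompositions K = K1 K2 (resp. K1 K2 K3) are indexed by the cut points. *)
Definition act (g : gen) (b : basis) : seq basis :=
  let: (l5, K, l6) := b in
  match g with
  | GenF l1 l2 Is Js l3 l4 =>
      if [&& l5 == l2, K == Js & l6 == l4] then [:: (l1, Is, l3)] else [::]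
  | GenL l1 l2 Is Js =>
      if l5 == l2 then
        [seq (l1, Is ++ drop i K, l6) | i <- iota 0 (size K).+1 & take i K == Js]
      else [::]
  | GenR Is Js l1 l2 =>
      if l6 == l2 then
        [seq (l5, take i K ++ Is, l1) | i <- iota 0 (size K).+1 & drop i K == Js]
      else [::]
  | GenS Is Js =>
      flatten [seq [seq (l5, take i K ++ Is ++ drop j K, l6)
                   | j <- iota i (size K - i).+1 & drop i (take j K) == Js]
              | i <- iota 0 (size K).+1]
  end.

Definition coef (g : gen) (b b' : basis) : CC := (count_mem b' (act g b))%:R.

Definition inB1 (L LF : nat) (g : gen) : Prop :=
  match g with
  | GenF l1 l2 Is Js l3 l4 =>
      [/\ valid_lam LF l1 && valid_lam LF l2, valid_lam LF l3 && valid_lam LF l4,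
          valid_seq L Is && valid_seq L Js, (2 < l1 + l2)%N & (2 < l3 + l4)%N]
  | GenL l1 l2 Is Js =>
      [/\ valid_lam LF l1, valid_lam LF l2, valid_seq L Is & valid_seq L Js]
  | GenR Is Js l1 l2 =>
      [/\ valid_lam LF l1, valid_lam LF l2, valid_seq L Is, valid_seq L Js
        & (l1 != 1%N) || (l2 != 1%N)]
  | GenS Is Js =>
      valid_seq L Is /\ valid_seq L Js /\
      ((Is == [::]) || (Js == [::]) ||
       ~~ ((head 0%N Is == 1%N) && (head 0%N Js == 1%N)))
  end.

(* A finite linear combination sum_{g in s} c g * g of operators on T_o is the
   zero operator iff it sends every basis vector of T_o to 0. *)
Definition lincomb_zero (L LF : nat) (s : seq gen) (c : gen -> CC) : Prop :=
  forall b : basis, valid_basis L LF b ->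
  forall b' : basis, (\sum_(g <- s) c g * coef g b b')%R = 0%R.

(* Main.v *)
Require Import Defs.
From HB Require Import structures.
From mathcomp Require Import all_boot all_algebra ring.
From Stdlib Require List.
Set Implicit Arguments. Unset Strict Implicit. Unset Printing Implicit Defensive.
Import GRing.Theory.

Definition gen_eqb (g h : gen) : bool :=
  match g, h with
  | GenF a b c d e f, GenF a' b' c' d' e' f' =>
      [&& a == a', b == b', c == c', d == d', e == e' & f == f']
  | GenL a b c d, GenL a' b' c' d' => [&& a == a', b == b', c == c' & d == d']
  | GenR a b c d, GenR a' b' c' d' => [&& a == a', b == b', c == c' & d == d']
  | GenS a b, GenS a' b' => (a == a') && (b == b')
  | _, _ => false
  end.

Lemma gen_eqP : Equality.axiom gen_eqb.
Proof.
case=> [a b c d e f|a b c d|a b c d|a b] [a' b' c' d' e' f'|a' b' c' d'|a' b' c' d'|a' b'] /=;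
  try (by constructor);
  repeat (case: eqP => [->|H]; last by constructor; case=> *; apply: H);
  by constructor.
Qed.

HB.instance Definition _ := hasDecEq.Build gen gen_eqP.

Lemma eqgenE g h : (g == h) = gen_eqb g h.
Proof. by []. Qed.

Definition condP (K K' : seq nat) (p : nat) : bool :=
  (size K - p <= size K')%N && (drop (size K' - (size K - p)) K' == drop p K).
Definition mP (K K' : seq nat) (p : nat) : nat := (size K' - (size K - p))%N.
Definition rc (K K' : seq nat) (i : nat) : bool :=
  (i <= size K')%N && (take i K' == take i K).

Definition GsF (b b' : basis) : seq gen :=
  let: (a, K, bb) := b in let: (x, K', y) := b' in [:: GenF x a K' K y bb].
Definition GsL (b b' : basis) : seq gen :=
  let: (a, K, bb) := b in let: (x, K', y) := b' in
  if y == bb then [seq GenL x a (take (mP K K' p) K') (take p K)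
                  | p <- iota 0 (size K).+1 & condP K K' p] else [::].
Definition GsR (b b' : basis) : seq gen :=
  let: (a, K, bb) := b in let: (x, K', y) := b' in
  if x == a then [seq GenR (drop i K') (drop i K) y bb
                 | i <- iota 0 (size K).+1 & rc K K' i] else [::].
Definition rowS (K K' : seq nat) : seq gen :=
  [seq GenS (take (mP K K' p) K') (take p K) | p <- iota 0 (size K).+1 & condP K K' p].
Definition GsS (b b' : basis) : seq gen :=
  let: (a, K, bb) := b in let: (x, K', y) := b' in
  flatten [seq (if [&& x == a, y == bb & rc K K' i] then rowS (drop i K) (drop i K') else [::])
          | i <- iota 0 (size K).+1].
Definition Gs b b' := GsF b b' ++ GsL b b' ++ GsR b b' ++ GsS b b'.

Lemma cat_eq_l (s u t : seq nat) :
  (u ++ t == s) = [&& (size u <= size s)%N, take (size u) s == u & drop (size u) s == t].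
Proof.
apply/eqP/idP.
  by move=> <-; rewrite size_cat leq_addr take_size_cat // drop_size_cat // !eqxx.
case/and3P=> _ /eqP Hu /eqP Ht; rewrite -Ht -{1}Hu; exact: cat_take_drop.
Qed.

Lemma cat_eq_r (s u t : seq nat) :
  (u ++ t == s) = [&& (size t <= size s)%N, drop (size s - size t) s == t
                    & take (size s - size t) s == u].
Proof.
apply/eqP/idP.
  move=> <-; rewrite size_cat leq_addl addnK take_size_cat // drop_size_cat //.
  by rewrite !eqxx.
case/and3P=> _ /eqP Ht /eqP Hu; rewrite -Ht -{1}Hu; exact: cat_take_drop.
Qed.

Lemma count_if (T : Type) (c : bool) (P : pred T) l :
  (if c then count P l else 0%N) = count (fun i => c && P i) l.
Proof. by case: c => //; rewrite count_pred0. Qed.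

Lemma count_map0 (A : Type) (T : eqType) (f : A -> T) (g : T) l :
  (forall a, f a != g) -> count_mem g (map f l) = 0%N.
Proof. by move=> H; elim: l => //= a l ->; rewrite addn0 (negbTE (H a)). Qed.

Lemma count_flat0 (T : eqType) (g : T) (ss : seq (seq T)) :
  (forall s, count_mem g s = 0%N) -> count_mem g (flatten ss) = 0%N.
Proof. by move=> H; elim: ss => //= s ss IH; rewrite count_cat H IH. Qed.

Ltac bsolve := repeat match goal with
  | |- context [ (?x == ?y) ] => case: (x == y)
  | |- context [ (?x <= ?y)%N ] => case: (x <= y)%N
  end; done.



Lemma count_flatmap0 (A : Type) (T : eqType) (g : T) (F : A -> seq T) l :
  (forall i, count_mem g (F i) = 0%N) -> count_mem g (flatten (map F l)) = 0%N.
Proof. by move=> H; elim: l => //= s ss IH; rewrite count_cat H IH. Qed.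

Lemma count_ifl (T : eqType) (g : T) (c : bool) l :
  count_mem g (if c then l else [::]) = if c then count_mem g l else 0%N.
Proof. by case: c. Qed.

Lemma count_Gs g b b' : count_mem b' (act g b) = count_mem g (Gs b b').
Proof.
case: b => [[a K] bb]; case: b' => [[x K'] y].
rewrite /Gs 3!count_cat.
case: g => [l1 l2 Is Js l3 l4 | l1 l2 Is Js | Is Js l1 l2 | Is Js].
- rewrite [count _ (GsL _ _)](_ : _ = 0%N); last first.
    by rewrite /GsL; case: ifP => _ //; apply: count_map0.
  rewrite [count _ (GsR _ _)](_ : _ = 0%N); last first.
    by rewrite /GsR; case: ifP => _ //; apply: count_map0.
  rewrite [count _ (GsS _ _)](_ : _ = 0%N); last first.
    by rewrite /GsS; apply: count_flatmap0 => i; case: ifP => _ //; apply: count_map0.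
  rewrite /= !addn0 eqgenE /=.
  case: ifP => H /=; last by move: H; bsolve.
  rewrite !xpair_eqE [l1 == _]eq_sym [Is == _]eq_sym [l3 == _]eq_sym addn0.
  move: H; bsolve.
- rewrite [count _ (GsF _ _)](_ : _ = 0%N) //.
  rewrite [count _ (GsR _ _)](_ : _ = 0%N); last first.
    by rewrite /GsR; case: ifP => _ //; apply: count_map0.
  rewrite [count _ (GsS _ _)](_ : _ = 0%N); last first.
    by rewrite /GsS; apply: count_flatmap0 => i; case: ifP => _ //; apply: count_map0.
  rewrite add0n addn0 /act /GsL !count_ifl !count_map !count_filter !count_if.
  rewrite addn0; apply: eq_count => p /=.
  rewrite !xpair_eqE cat_eq_r size_drop eqgenE /= /condP /mP.
  rewrite [l1 == _]eq_sym [bb == _]eq_sym.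
  bsolve.
- rewrite [count _ (GsF _ _)](_ : _ = 0%N) //.
  rewrite [count _ (GsL _ _)](_ : _ = 0%N); last first.
    by rewrite /GsL; case: ifP => _ //; apply: count_map0.
  rewrite [count _ (GsS _ _)](_ : _ = 0%N); last first.
    by rewrite /GsS; apply: count_flatmap0 => i; case: ifP => _ //; apply: count_map0.
  rewrite add0n addn0 /act /GsR !count_ifl !count_map !count_filter !count_if.
  apply: eq_in_count => i; rewrite mem_iota add0n ltnS => /andP[_ Hi] /=.
  rewrite !xpair_eqE cat_eq_l size_takel // eqgenE /= /rc.
  rewrite [a == _]eq_sym [l1 == _]eq_sym.
  bsolve.
- rewrite [count _ (GsF _ _)](_ : _ = 0%N) //.
  rewrite [count _ (GsL _ _)](_ : _ = 0%N); last first.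
    by rewrite /GsL; case: ifP => _ //; apply: count_map0.
  rewrite [count _ (GsR _ _)](_ : _ = 0%N); last first.
    by rewrite /GsR; case: ifP => _ //; apply: count_map0.
  rewrite !add0n /act /GsS !count_flatten -!map_comp; congr sumn.
  apply/eq_in_map => i; rewrite mem_iota add0n ltnS => Hi.
  rewrite /comp; cbv beta.
  rewrite (_ : iota i (size K - i).+1 = map (addn i) (iota 0 (size K - i).+1));
    last by rewrite -iotaDl addn0.

  rewrite count_ifl /rowS filter_map !count_map !count_filter count_if size_drop.
  apply: eq_in_count => p; rewrite mem_iota add0n ltnS => Hp /=.
  rewrite !xpair_eqE cat_eq_l size_takel // [drop i K' == _]eq_sym cat_eq_r.
  rewrite eqgenE /= /condP /mP /rc.
  rewrite addnC -drop_drop -take_drop !size_drop.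
  rewrite [a == _]eq_sym [bb == _]eq_sym.
  bsolve.
Qed.

Local Open Scope ring_scope.

Definition Pf (phi : seq nat -> seq nat -> CC) K K' : CC :=
  \sum_(p <- iota 0 (size K).+1 | condP K K' p) phi (take (mP K K' p) K') (take p K).
Definition Qf (phi : seq nat -> seq nat -> CC) K K' : CC :=
  \sum_(i <- iota 0 (size K).+1 | rc K K' i) phi (drop i K') (drop i K).
Definition SSf (phi : seq nat -> seq nat -> CC) K K' : CC :=
  \sum_(i <- iota 0 (size K).+1 | rc K K' i) Pf phi (drop i K) (drop i K').

Lemma big_ifl (D : gen -> CC) (c : bool) l :
  \sum_(h <- if c then l else [::]) D h = if c then \sum_(h <- l) D h else 0.
Proof. by case: c; rewrite ?big_nil. Qed.

Lemma sumGs (D : gen -> CC) a K bb x K' y :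
  \sum_(h <- Gs (a, K, bb) (x, K', y)) D h =
  D (GenF x a K' K y bb)
  + (if y == bb then Pf (fun I J => D (GenL x a I J)) K K' else 0)
  + (if x == a then Qf (fun I J => D (GenR I J y bb)) K K' else 0)
  + (if (x == a) && (y == bb) then SSf (fun I J => D (GenS I J)) K K' else 0).
Proof.
have Ecat : forall l1 l2 : seq gen, \sum_(h <- l1 ++ l2) D h = \sum_(h <- l1) D h + \sum_(h <- l2) D h.
  by move=> l1 l2; rewrite big_cat.
rewrite /Gs 3!Ecat.
have -> : GsF (a, K, bb) (x, K', y) = [:: GenF x a K' K y bb] by [].
have -> : GsL (a, K, bb) (x, K', y) = if y == bb then [seq GenL x a (take (mP K K' p) K') (take p K)
                  | p <- iota 0 (size K).+1 & condP K K' p] else [::] by [].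
have -> : GsR (a, K, bb) (x, K', y) = if x == a then [seq GenR (drop i K') (drop i K) y bb
                 | i <- iota 0 (size K).+1 & rc K K' i] else [::] by [].
have -> : GsS (a, K, bb) (x, K', y) = flatten [seq (if [&& x == a, y == bb & rc K K' i] then rowS (drop i K) (drop i K') else [::])
          | i <- iota 0 (size K).+1] by [].
rewrite big_cons big_nil ?addr0 !addrA.
congr (_ + _ + _ + _).
- by rewrite big_ifl big_map big_filter.
- by rewrite big_ifl big_map big_filter.
rewrite big_flatten big_map.
case: ifP => H.
  rewrite /SSf [RHS]big_mkcond; apply: eq_bigr => i _.
  by move: H => /andP[-> ->] /=; rewrite big_ifl /rowS big_map big_filter.
rewrite big1 // => i _; case: ifP => [/and3P[H1 H2 _]|_]; last by rewrite big_nil.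
by move: H; rewrite H1 H2.
Qed.

Lemma sum_pred1 (s : seq gen) (c : gen -> CC) h : uniq s ->
  \sum_(g <- s) c g * (h == g)%:R = if h \in s then c h else 0.
Proof.
elim: s => [|g0 s IH] /=; first by rewrite big_nil.
case/andP=> Hn Hu; rewrite big_cons IH // in_cons.
case: eqP => [->|_] /=; last by rewrite mulr0 add0r.
by rewrite (negbTE Hn) mulr1 addr0.
Qed.

Lemma sum_count (s : seq gen) (c : gen -> CC) (l : seq gen) : uniq s ->
  \sum_(g <- s) c g * (count_mem g l)%:R = \sum_(h <- l) (if h \in s then c h else 0).
Proof.
move=> Hu; elim: l => [|h l IH].
  by rewrite big_nil big1 // => g _; rewrite mulr0.
rewrite big_cons -IH -sum_pred1 // -big_split /=; apply: eq_bigr => g _.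
by rewrite natrD mulrDr.
Qed.

Definition Ex (D : gen -> CC) a K bb x K' y : CC :=
  D (GenF x a K' K y bb)
  + (if y == bb then Pf (fun I J => D (GenL x a I J)) K K' else 0)
  + (if x == a then Qf (fun I J => D (GenR I J y bb)) K K' else 0)
  + (if (x == a) && (y == bb) then SSf (fun I J => D (GenS I J)) K K' else 0).

Definition Good L LF (D : gen -> CC) : Prop :=
  (forall g, ~ inB1 L LF g -> D g = 0) /\
  (forall a K bb x K' y, valid_lam LF a -> valid_seq L K -> valid_lam LF bb ->
     Ex D a K bb x K' y = 0).

Lemma sumr_cat (T : Type) (l1 l2 : seq T) (P : pred T) (F : T -> CC) :
  \sum_(i <- l1 ++ l2 | P i) F i = \sum_(i <- l1 | P i) F i + \sum_(i <- l2 | P i) F i.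
Proof. by rewrite big_cat. Qed.

Lemma TriP L (phi : seq nat -> seq nat -> CC) :
  (forall J I, valid_seq L J -> Pf phi J I = 0) ->
  (forall I J, ~~ valid_seq L J -> phi I J = 0) -> forall I J, phi I J = 0.
Proof.
move=> HP Hinv I J; move: {2}(size J).+1 (ltnSn (size J)) => n.
elim: n I J => // n IH I J HJ.
case: (boolP (valid_seq L J)) => Hv; last exact: Hinv.
have := HP J I Hv; rewrite /Pf -addn1 iotaD sumr_cat add0n.
rewrite (_ : iota (size J) 1 = [:: size J]) // big_cons big_nil.
rewrite /condP /mP subnn subn0 !drop_size eqxx leq0n andbT !take_size.
rewrite big1_seq ?add0r ?addr0 //.
move=> p /andP[_]; rewrite mem_iota add0n => /andP[_ Hp].
apply: IH; rewrite size_takel ?(ltnW Hp) //.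
exact: leq_trans Hp _.
Qed.

Lemma TriQ L (phi : seq nat -> seq nat -> CC) :
  (forall J I, valid_seq L J -> Qf phi J I = 0) ->
  (forall I J, ~~ valid_seq L J -> phi I J = 0) -> forall I J, phi I J = 0.
Proof.
move=> HP Hinv I J; move: {2}(size J).+1 (ltnSn (size J)) => n.
elim: n I J => // n IH I J HJ.
case: (boolP (valid_seq L J)) => Hv; last exact: Hinv.
have := HP J I Hv; rewrite /Qf (_ : iota 0 (size J).+1 = 0%N :: iota 1 (size J)) //.
rewrite big_cons /rc leq0n !take0 eqxx andbT !drop0.
rewrite big1_seq ?addr0 //.
move=> i /andP[_]; rewrite mem_iota => /andP[Hi1 Hi2].
apply: IH; rewrite size_drop.
rewrite add1n ltnS in Hi2.
have : (size J - i < size J)%N by rewrite ltn_subrL Hi1 (leq_trans Hi1 Hi2).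
move=> H; exact: leq_trans H _.
Qed.

Lemma Pf0 (phi : seq nat -> seq nat -> CC) K K' :
  (forall I J, phi I J = 0) -> Pf phi K K' = 0.
Proof. by move=> H; rewrite /Pf big1 // => p _; apply: H. Qed.
Lemma Qf0 (phi : seq nat -> seq nat -> CC) K K' :
  (forall I J, phi I J = 0) -> Qf phi K K' = 0.
Proof. by move=> H; rewrite /Qf big1 // => p _; apply: H. Qed.

Lemma validl1 LF : (0 < LF)%N -> valid_lam LF 1.
Proof. by rewrite /valid_lam. Qed.

Lemma iotaS0 n : iota 0 n.+1 = 0%N :: [seq i.+1 | i <- iota 0 n].
Proof.
rewrite /=; congr (_ :: _); rewrite -[1%N]/(1 + 0)%N iotaDl.
by apply: eq_map => i; rewrite add1n.
Qed.

Lemma SSf_nil (s : seq nat -> seq nat -> CC) K' : SSf s [::] K' = Pf s [::] K'.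
Proof.
rewrite /SSf (_ : iota 0 (size [::]).+1 = [:: 0%N]) // big_cons big_nil.
by rewrite /rc leq0n !take0 eqxx andbT !drop0 addr0.
Qed.

Lemma SSf_nilr (s : seq nat -> seq nat -> CC) K : SSf s K [::] = Pf s K [::].
Proof.
rewrite /SSf iotaS0 big_cons big_map /rc leq0n !take0 eqxx andbT !drop0.
by rewrite big_pred0 ?addr0.
Qed.

Lemma SSf_cons (s : seq nat -> seq nat -> CC) x y K K' :
  SSf s (x :: K) (y :: K') = Pf s (x :: K) (y :: K') + (if x == y then SSf s K K' else 0).
Proof.
rewrite /SSf (_ : size (x :: K) = (size K).+1) // iotaS0 big_cons big_map.
rewrite {1}/rc leq0n !take0 eqxx andbT !drop0; congr (_ + _).
case: eqP => [<-|Hne].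
  apply: eq_big => [i|i _] //.
  by rewrite /rc /= ltnS eqseq_cons eqxx.
rewrite big_pred0 // => i; rewrite /rc /= eqseq_cons.
have Hn : (x == y) = false by apply/eqP.
by rewrite [y == x]eq_sym Hn andFb andbF.
Qed.

Lemma Pf_nil (phi : seq nat -> seq nat -> CC) X : Pf phi [::] X = phi X [::].
Proof.
rewrite /Pf (_ : iota 0 (size [::]).+1 = [:: 0%N]) // big_cons big_nil.
by rewrite /condP /mP /= ?subn0 ?drop_size ?eqxx ?leq0n /= ?take_size ?addr0.
Qed.

Lemma Pf_nilr (phi : seq nat -> seq nat -> CC) Y : Pf phi Y [::] = phi [::] Y.
Proof.
rewrite /Pf -addn1 iotaD sumr_cat add0n.
rewrite (_ : iota (size Y) 1 = [:: size Y]) // big_cons big_nil.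
rewrite /condP /mP subnn !drop_size eqxx leq0n andbT take_size.
rewrite big1_seq ?add0r ?addr0 // => p /andP[/andP[H _]].
rewrite mem_iota => /andP[_ Hp].
by move: H; rewrite /= leqn0 subn_eq0 leqNgt Hp.
Qed.

Lemma Pf_shift (phi : seq nat -> seq nat -> CC) x K K' :
  (forall X, phi X [::] = 0) -> (forall Y, phi [::] Y = 0) ->
  Pf phi (x :: K) (x :: K') = Pf (fun I J => phi (x :: I) (x :: J)) K K'.
Proof.
move=> H1 H2.
rewrite /Pf (_ : size (x :: K) = (size K).+1) // iotaS0 big_cons big_map.
rewrite take0 H1 add0r if_same.
rewrite big_mkcond [RHS]big_mkcond; apply: eq_bigr => i _.
rewrite /condP /mP (_ : size (x :: K') = (size K').+1) // subSS.
case: (leqP (size K - i) (size K')) => H.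
  rewrite subSn // (leq_trans H (leqnSn _)) /=.
  by case: (_ == _).
rewrite (_ : ((size K').+1 - (size K - i))%N = 0%N); last by apply/eqP; rewrite subn_eq0.
by rewrite take0 H2; case: (_ && _).
Qed.

Lemma PfB (f g : seq nat -> seq nat -> CC) K K' :
  Pf (fun I J => f I J - g I J) K K' = Pf f K K' - Pf g K K'.
Proof. by rewrite /Pf -sumrB. Qed.

Lemma PfD (f g : seq nat -> seq nat -> CC) K K' :
  Pf (fun I J => f I J + g I J) K K' = Pf f K K' + Pf g K K'.
Proof. by rewrite /Pf -big_split. Qed.

Section Steps.
End Steps.

Lemma stepR1 L LF D : (0 < LF)%N -> Good L LF D ->
  forall l1 l2, l1 != l2 -> forall I J, D (GenR I J l1 l2) = 0.
Proof.
move=> hLF [HZ HE] l1 l2 Hne.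
case: (boolP (valid_lam LF l2)) => Hl2; last first.
  by move=> I J; apply: HZ; case=> _ H; move: Hl2; rewrite H.
apply: (TriQ (L:=L) (phi := fun I J => D (GenR I J l1 l2))); last first.
  by move=> I J HJ; apply: HZ; case=> _ _ _ H; move: HJ; rewrite H.
move=> J I HJ; have := HE 1%N J l2 1%N I l1 (validl1 hLF) HJ Hl2.
rewrite /Ex (negbTE Hne) eqxx /= HZ; last by case.
by rewrite !add0r addr0.
Qed.

Lemma stepL1 L LF D : (0 < LF)%N -> Good L LF D ->
  forall l1 l2, l1 != l2 -> forall I J, D (GenL l1 l2 I J) = 0.
Proof.
move=> hLF [HZ HE] l1 l2 Hne.
case: (boolP (valid_lam LF l2)) => Hl2; last first.
  by move=> I J; apply: HZ; case=> _ H; move: Hl2; rewrite H.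
apply: (TriP (L:=L) (phi := fun I J => D (GenL l1 l2 I J))); last first.
  by move=> I J HJ; apply: HZ; case=> _ _ _ H; move: HJ; rewrite H.
move=> J I HJ; have := HE l2 J 1%N l1 I 1%N Hl2 HJ (validl1 hLF).
rewrite /Ex (negbTE Hne) eqxx /= HZ; last by case.
by rewrite add0r !addr0.
Qed.

Lemma stepF1 L LF D : (0 < LF)%N -> Good L LF D ->
  forall x a I J y bb, (x != a) || (y != bb) -> D (GenF x a I J y bb) = 0.
Proof.
move=> hLF HG x a I J y bb Hne.
have HL := stepL1 hLF HG; have HR := stepR1 hLF HG.
case: HG => HZ HE.
case: (boolP [&& valid_lam LF a, valid_seq L J & valid_lam LF bb]); last first.
  move=> Hn; apply: HZ; case=> /andP[_ Ha] /andP[_ Hb] /andP[_ HJ] _ _.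
  by move: Hn; rewrite Ha HJ Hb.
case/and3P=> Ha HJ Hb; have := HE a J bb x I y Ha HJ Hb.
rewrite /Ex.
case: (boolP (y == bb)) => Hy; case: (boolP (x == a)) => Hx; move: Hne; rewrite ?Hx ?Hy //= => _.
- by rewrite (Pf0 _ _ (HL _ _ Hx)) !addr0.
- by rewrite (Qf0 _ _ (HR _ _ Hy)) !addr0.
- by rewrite !addr0.
Qed.

Lemma stepR2 L LF D : (0 < LF)%N -> Good L LF D ->
  forall bb, bb != 1%N -> forall I J, D (GenR I J bb bb) = 0.
Proof.
move=> hLF [HZ HE] bb Hne.
case: (boolP (valid_lam LF bb)) => Hb; last first.
  by move=> I J; apply: HZ; case=> _ H; move: Hb; rewrite H.
apply: (TriQ (L:=L) (phi := fun I J => D (GenR I J bb bb))); last first.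
  by move=> I J HJ; apply: HZ; case=> _ _ _ H; move: HJ; rewrite H.
move=> J I HJ.
have := HE 1%N J bb 1%N I bb (validl1 hLF) HJ Hb.
have := HE 1%N J 1%N 1%N I 1%N (validl1 hLF) HJ (validl1 hLF).
rewrite /Ex !eqxx /= !(HZ (GenF _ _ _ _ _ _)); try by case.
rewrite (Qf0 (phi := fun I J => D (GenR I J 1%N 1%N))); last first.
  by move=> X Y; apply: HZ; case=> _ _ _ _; rewrite eqxx.
move=> E2 E1.
set A := Pf _ J I in E1 E2; set B := SSf _ J I in E1 E2; set Q := Qf _ J I in E1 *.
have -> : Q = (0 + A + Q + B) - (0 + A + 0 + B) by ring.
by rewrite E1 E2 subrr.
Qed.

Lemma stepL2 L LF D : (0 < LF)%N -> Good L LF D ->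
  forall a, valid_lam LF a -> forall I J, D (GenL a a I J) = D (GenL 1%N 1%N I J).
Proof.
move=> hLF [HZ HE] a Ha I J.
apply/eqP; rewrite -subr_eq0; apply/eqP; move: I J.
apply: (TriP (L:=L) (phi := fun I J => D (GenL a a I J) - D (GenL 1%N 1%N I J))); last first.
  by move=> I J HJ; rewrite !HZ ?subrr //; case=> _ _ _ H; move: HJ; rewrite H.
move=> J I HJ.
have := HE a J 1%N a I 1%N Ha HJ (validl1 hLF).
have := HE 1%N J 1%N 1%N I 1%N (validl1 hLF) HJ (validl1 hLF).
rewrite /Ex !eqxx /= !(HZ (GenF _ _ _ _ _ _)); try by case.
rewrite !(Qf0 (phi := fun I J => D (GenR I J 1%N 1%N))); last first.
  by move=> X Y; apply: HZ; case=> _ _ _ _; rewrite eqxx.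
move=> E2 E1; rewrite PfB.
set A := Pf _ J I in E1 *; set A1 := Pf _ J I in E2 *; set B := SSf _ J I in E1 E2.
have -> : A - A1 = (0 + A + 0 + B) - (0 + A1 + 0 + B) by ring.
by rewrite E1 E2 subrr.
Qed.

Lemma stepF2 L LF D : (0 < LF)%N -> Good L LF D ->
  forall a I J bb, D (GenF a a I J bb bb) = 0.
Proof.
move=> hLF HG a I J bb.
have HR := stepR2 hLF HG; case: HG => HZ HE.
case: (boolP [&& valid_lam LF a, valid_seq L J, valid_lam LF bb & (2 < bb + bb)%N]); last first.
  move=> Hn; apply: HZ; case=> /andP[_ Ha] /andP[_ Hb] /andP[_ HJ] _ H.
  by move: Hn; rewrite Ha HJ Hb H.
case/and4P=> Ha HJ Hb H2.
have Hb1 : bb != 1%N by apply/eqP => E; move: H2; rewrite E.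
have := HE a J bb a I bb Ha HJ Hb.
have := HE a J 1%N a I 1%N Ha HJ (validl1 hLF).
rewrite /Ex !eqxx /= (HZ (GenF a a I J 1%N 1%N)); last by case.
rewrite (Qf0 (phi := fun I J => D (GenR I J 1%N 1%N))); last first.
  by move=> X Y; apply: HZ; case=> _ _ _ _; rewrite eqxx.
rewrite (Qf0 (phi := fun I J => D (GenR I J bb bb))); last by move=> X Y; apply: HR.
move=> E2 E1.
set A := Pf _ J I in E1 E2; set B := SSf _ J I in E1 E2; set F := D _ in E1 *.
have -> : F = (F + A + 0 + B) - (0 + A + 0 + B) by ring.
by rewrite E1 E2 subrr.
Qed.

Lemma core_eq L LF D : (0 < LF)%N -> Good L LF D -> forall K K', valid_seq L K ->
  Pf (fun I J => D (GenL 1%N 1%N I J)) K K' + SSf (fun I J => D (GenS I J)) K K' = 0.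
Proof.
move=> hLF [HZ HE] K K' HK.
have := HE 1%N K 1%N 1%N K' 1%N (validl1 hLF) HK (validl1 hLF).
rewrite /Ex !eqxx /= (HZ (GenF _ _ _ _ _ _)); last by case.
rewrite (Qf0 (phi := fun I J => D (GenR I J 1%N 1%N))); last first.
  by move=> X Y; apply: HZ; case=> _ _ _ _; rewrite eqxx.
by rewrite add0r addr0.
Qed.

Lemma coreL L LF D : (0 < L)%N -> (0 < LF)%N -> Good L LF D ->
  forall I J, D (GenL 1%N 1%N (1%N :: I) (1%N :: J)) = D (GenL 1%N 1%N I J).
Proof.
move=> hL hLF HG.
have HC := core_eq hLF HG; case: (HG) => HZ HE.
set l := fun I J => D (GenL 1%N 1%N I J); set s := fun I J => D (GenS I J).
have T1 : forall X, l X [::] + s X [::] = 0.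
  by move=> X; have := HC [::] X isT; rewrite SSf_nil !Pf_nil.
have T2 : forall Y, l [::] Y + s [::] Y = 0.
  move=> Y; case: (boolP (valid_seq L Y)) => HY.
    by have := HC Y [::] HY; rewrite SSf_nilr !Pf_nilr.
  rewrite /l /s !HZ ?addr0 //.
    by case=> _ [H _]; move: HY; rewrite H.
  by case=> _ _ _ H; move: HY; rewrite H.
move=> I J; apply/eqP; rewrite -subr_eq0; apply/eqP; move: I J.
apply: (TriP (L:=L) (phi := fun I J => l (1%N :: I) (1%N :: J) - l I J)); last first.
  move=> I J HJ; rewrite /l !HZ ?subrr //.
    by case=> _ _ _ H; move: HJ; rewrite H.
  by case=> _ _ _ /andP[_ H]; move/negP: HJ; apply.
move=> J I HJ; rewrite PfB.
have HJ1 : valid_seq L (1%N :: J) by rewrite /= HJ hL.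
have E1 := HC _ (1%N :: I) HJ1; have E2 := HC _ I HJ.
rewrite SSf_cons eqxx in E1.
have Hsh := Pf_shift (phi := fun I J => l I J + s I J) 1%N J I T1 T2.
rewrite PfD in Hsh.
have -> : Pf (fun I J => l (1%N :: I) (1%N :: J)) J I
        = Pf (fun I J => l (1%N :: I) (1%N :: J) + s (1%N :: I) (1%N :: J)) J I.
  apply: eq_bigr => p _; rewrite /s HZ ?addr0 //.
  by case=> _ [_].
rewrite -Hsh.
move: E1 E2; rewrite -/l -/s.
set A := Pf l _ _; set B := Pf s _ _; set C := SSf s J I; set A0 := Pf l J I.
move=> E1 E2.
have -> : A + B - A0 = (A + (B + C)) - (A0 + C) by ring.
by rewrite E1 E2 subrr.
Qed.

Lemma allL L LF D (N : nat) : (0 < L)%N -> (0 < LF)%N -> Good L LF D ->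
  (forall I J, (N < size I)%N -> D (GenL 1%N 1%N I J) = 0) ->
  forall I J, D (GenL 1%N 1%N I J) = 0.
Proof.
move=> hL hLF HG HF I J.
have E : forall m, D (GenL 1%N 1%N I J) = D (GenL 1%N 1%N (nseq m 1%N ++ I) (nseq m 1%N ++ J)).
  elim=> // m IH; rewrite IH /=; exact: (esym (coreL hL hLF HG _ _)).
rewrite (E N.+1); apply: HF; rewrite size_cat size_nseq; exact: leq_addr.
Qed.

Lemma allS L LF D (N : nat) : (0 < L)%N -> (0 < LF)%N -> Good L LF D ->
  (forall I J, (N < size I)%N -> D (GenL 1%N 1%N I J) = 0) ->
  forall I J, D (GenS I J) = 0.
Proof.
move=> hL hLF HG HF.
have HL := allL hL hLF HG HF; have HC := core_eq hLF HG; case: HG => HZ HE.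
have HS : forall K K', valid_seq L K -> SSf (fun I J => D (GenS I J)) K K' = 0.
  move=> K K' HK; have := HC K K' HK.
  by rewrite (Pf0 (phi := fun I J => D (GenL 1%N 1%N I J))) // add0r.
apply: (TriP (L:=L) (phi := fun I J => D (GenS I J))); last first.
  by move=> I J HJ; apply: HZ; case=> _ [H _]; move: HJ; rewrite H.
move=> J I HJ; case: J HJ => [|x J0] HJ.
  by rewrite -SSf_nil HS.
case: I => [|y I0]; first by rewrite -SSf_nilr HS.
have := HS _ (y :: I0) HJ; rewrite SSf_cons.
case: (x == y); last by rewrite addr0.
move: HJ => /andP[_ HJ0]; by rewrite HS // addr0.
Qed.

Lemma allzero L LF D (N : nat) : (0 < L)%N -> (0 < LF)%N -> Good L LF D ->
  (forall I J, (N < size I)%N -> D (GenL 1%N 1%N I J) = 0) ->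
  forall g, D g = 0.
Proof.
move=> hL hLF HG HF.
have HL := allL hL hLF HG HF; have HS := allS hL hLF HG HF.
case=> [x a I J y bb|l1 l2 I J|I J l1 l2|I J] //.
- case: (boolP ((x != a) || (y != bb))) => H; first exact: stepF1 hLF HG _ _ _ _ _ _ H.
  move: H; rewrite negb_or !negbK => /andP[/eqP -> /eqP ->]; exact: stepF2 hLF HG _ _ _ _.
- case: (boolP (l1 != l2)) => H; first exact: stepL1 hLF HG _ _ H I J.
  move: H; rewrite negbK => /eqP <-.
  case: (boolP (valid_lam LF l1)) => Hv; first by rewrite (stepL2 hLF HG Hv) HL.
  by case: HG => HZ _; apply: HZ; case=> H; move: Hv; rewrite H.
- case: (boolP (l1 != l2)) => H; first exact: stepR1 hLF HG _ _ H I J.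
  move: H; rewrite negbK => /eqP <-.
  case: (boolP (l1 != 1%N)) => H1; first exact: stepR2 hLF HG _ H1 I J.
  move: H1; rewrite negbK => /eqP ->.
  by case: HG => HZ _; apply: HZ; case.
Qed.

Local Close Scope ring_scope.

Lemma NoDup_uniq (s : seq gen) : List.NoDup s -> uniq s.
Proof.
elim: s => //= g s IH /List.NoDup_cons_iff [Hn Hd]; rewrite IH // andbT.
apply/negP => Hin; apply: Hn; elim: s Hin {IH Hd} => //= h s IH2.
by rewrite in_cons => /orP[/eqP ->|/IH2]; [left|right].
Qed.

Lemma In_mem (s : seq gen) g : List.In g s <-> g \in s.
Proof.
elim: s => //= h s IH; rewrite in_cons; split.
  by case=> [->|/IH ->]; rewrite ?eqxx ?orbT.
by case/orP=> [/eqP ->|/IH]; [left|right].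
Qed.

Lemma le_sumn (f : gen -> nat) (s : seq gen) g : g \in s -> (f g <= sumn (map f s))%N.
Proof.
elim: s => //= h s IH; rewrite in_cons => /orP[/eqP ->|/IH H]; first exact: leq_addr.
exact: leq_trans H (leq_addl _ _).
Qed.

Theorem lemma3 (L LF : nat) (hL : (0 < L)%N) (hLF : (0 < LF)%N)
  (s : seq gen) (c : gen -> CC) :
  List.NoDup s -> (forall g, List.In g s -> inB1 L LF g) ->
  lincomb_zero L LF s c ->
  forall g, List.In g s -> c g = 0%R.
Proof.
move=> Hnd Hin Hlc.
have Hu := NoDup_uniq Hnd.
pose D g := if g \in s then c g else 0%R.
pose f g := match g with GenL _ _ Is _ => size Is | _ => 0%N end.
have HG : Good L LF D.
  split.
    move=> g Hg; rewrite /D; case: ifP => // /In_mem H.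
    by case: Hg; apply: Hin.
  move=> a K bb x K' y Ha HK Hb.
  rewrite /Ex -sumGs -sum_count //.
  have := Hlc (a, K, bb); rewrite /valid_basis /= Ha HK Hb => /(_ isT (x, K', y)).
  by rewrite /coef; under eq_bigr do rewrite count_Gs.
have HF : forall I J, (sumn (map f s) < size I)%N -> D (GenL 1%N 1%N I J) = 0%R.
  move=> I J HI; rewrite /D; case: ifP => // Hm.
  by have := le_sumn f Hm; rewrite /= leqNgt HI.
move=> g /In_mem Hg.
have := allzero hL hLF HG HF g; by rewrite /D Hg.
Qed.
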